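(* Let $\{\xi_k\}$ be the sequence of parameters produced by Algorithm DFNDFL (described in the context) applied to $\min\{f(x): x\in X\cap\mathcal{Z}\}$. Then $\lim_{k\to\infty}\xi_k=0$.
   Context: Setting. $\{1,\dots,n\}=I^c\cup I^z$, $I^c\cap I^z=\emptyset$; for $v\in\mathbb{R}^n$, $v_c=(v_i)_{i\in I^c}$, $v_z=(v_i)_{i\in I^z}$. $l,u\in\mathbb{R}^n$ finite, $l_i<u_i$, $l_i,u_i\in\mathbb{Z}$ for $i\in I^z$; $X=\{x:l\le x\le u\}$; $\mathcal{Z}=\{x:x_i\in\mathbb{Z}\ \forall i\in I^z\}$; $[x]_{[l,u]}=\max\{l,\min\{u,x\}\}$ componentwise; $\|\cdot\|$ Euclidean. $f:\mathbb{R}^n\to\mathbb{R}$ is Lipschitz w.r.t. continuous variables: $\exists L>0$, $|f(x)-f(y)|\le L\|x-y\|$ whenever $x_z=y_z$. A vector in $\mathbb{Z}^p$ is primitive if the gcd of its components is 1. For $x\in X\cap\mathcal{Z}$: $D^z(x)=\{d\in\mathbb{Z}^n: d_i=0\ (i\in I^c),\ d_z \text{ primitive},\ x+d\in X\cap\mathcal{Z}\}$; $D^c(x)=\{s\in\mathbb{R}^n: s_i=0\ (i\in I^z),\ s_i\ge0 \text{ if } i\in I^c, x_i=l_i,\ s_i\le 0 \text{ if } i\in I^c, x_i=u_i\}$. Procedures (data $\gamma>0$, $\delta\in(0,1)$). PCS$(\tilde\alpha,w,p)$: set $\alpha=\tilde\alpha$; if $f([w+\alpha p]_{[l,u]})\le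 f(w)-\gamma\alpha^2$ set $\tilde p=p$, else if $f([w-\alpha p]_{[l,u]})\le f(w)-\gamma\alpha^2$ set $\tilde p=-p$, else return $(0,p)$; then repeat: $\beta=\alpha/\delta$; if $f([w+\beta\tilde p]_{[l,u]})>f(w)-\gamma\beta^2$ return $(\alpha,\tilde p)$, else $\alpha=\beta$. DS$(\tilde\alpha,w,p,\xi)$: let $\bar\alpha$ be the largest $\alpha\ge0$ with $w+\alpha p\in X\cap\mathcal{Z}$, set $\alpha=\min\{\bar\alpha,\tilde\alpha\}$; if not ($\alpha>0$ and $f(w+\alpha p)\le f(w)-\xi$) return $0$; otherwise, while $\alpha<\bar\alpha$ and $f(w+\min\{\bar\alpha,2\alpha\}p)\le f(w)-\xi$, set $\alpha=\min\{\bar\alpha,2\alpha\}$; then return $\alpha$. Algorithm DFNDFL. Data: $x_0\in X\cap\mathcal{Z}$, $\xi_0>0$, $\theta\in(0,1)$; a sequence $\{s_k\}$ with $s_k\in D^c(x_0)$, $\|s_k\|=1$; $\tilde\alpha^c_0=1$; a set $D_0\subset D^z(x_0)$ with $\tilde\alpha^{(d)}_0=1$ for $d\in D_0$; $D:=D_0$ (tentative steps $\tilde\alpha^{(d)}$ not updated in an iteration keep their value). For $k=0,1,\dots$: Phase 1: $(\alpha^c_k,\tilde s_k)=$PCS$(\tilde\alpha^c_k,x_k,s_k)$; if $\alpha^c_k=0$ set $\tilde\alpha^c_{k+1}=\theta\tilde\alpha^c_k$, $\tilde x_k=x_k$; else $\tilde\alpha^c_{k+1}=\alpha^c_k$, $\tilde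 x_k=[x_k+\alpha^c_k\tilde s_k]_{[l,u]}$. Phase 2.A: set $y^+=\tilde x_k$; while $D\ne\emptyset$ and $y^+=\tilde x_k$: choose $d\in D$, set $D=D\setminus\{d\}$, $y=y^+$, $\alpha=$DS$(\tilde\alpha^{(d)}_k,y,d,\xi_k)$; if $\alpha=0$ set $y^+=y$, $\tilde\alpha^{(d)}_{k+1}=\max\{1,\lfloor\tilde\alpha^{(d)}_k/2\rfloor\}$; else $y^+=y+\alpha d$, $\tilde\alpha^{(d)}_{k+1}=\alpha$. Phase 2.B: if $y^+=\tilde x_k$ and the Discrete Search failed (returned $0$) with $\tilde\alpha^{(d)}_k=1$ for all $d\in D_k$, then set $\xi_{k+1}=\theta\xi_k$ and: if $D_k\supseteq D^z(\tilde x_k)$ set $D_{k+1}=D_k$; otherwise generate $D_{k+1}$ with $D_{k+1}\subseteq D^z(\tilde x_k)$, $D_{k+1}\supset D_k$ (strictly), and set $\tilde\alpha^{(d)}_{k+1}=1$ for $d\in D_{k+1}\setminus D_k$. Otherwise set $D_{k+1}=D_k$ and $\xi_{k+1}=\xi_k$. In all cases set $D=D_{k+1}$. Phase 3: choose any $x_{k+1}\in X\cap\mathcal{Z}$ with $f(x_{k+1})\le f(y^+)$. *)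

(* Defs.v *)
From HB Require Import structures.
From mathcomp Require Import all_boot all_order all_algebra.
From mathcomp Require Import all_classical all_reals all_analysis.
Set Implicit Arguments. Unset Strict Implicit. Unset Printing Implicit Defensive.
Import Order.TTheory GRing.Theory Num.Theory.
Local Open Scope ring_scope.

Section DFNDFL.
Variables (R : realType) (n : nat).

Definition vec := 'I_n -> R.
Definition dir := {ffun 'I_n -> int}.

Definition dir_vec (d : dir) : vec := fun i => (d i)%:~R.

Definition axpy (w q : vec) (a : R) : vec := fun i => w i + a * q i.

Definition enorm (v : vec) : R := Num.sqrt (\sum_(i < n) v i ^+ 2).

Definition proj (l u x : vec) : vec := fun i => Num.max (l i) (Num.min (u i) (x i)).

Definition inX (l u x : vec) : Prop := forall i, l i <= x i <= u i.
Definition inZ (Iz : pred 'I_n) (x : vec) : Prop :=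
  forall i, i \in Iz -> x i \is a Num.int.
Definition inXZ Iz l u x := inX l u x /\ inZ Iz x.

Definition lipschitz_cont (Iz : pred 'I_n) (f : vec -> R) : Prop :=
  exists L : R, 0 < L /\ forall x y : vec, (forall i, i \in Iz -> x i = y i) ->
    `|f x - f y| <= L * enorm (fun i => x i - y i).

Definition inDz (Iz : pred 'I_n) (l u x : vec) (d : dir) : Prop :=
  (forall i, i \notin Iz -> d i = 0) /\
  (\big[gcdz/0]_(i | i \in Iz) d i = 1) /\
  inXZ Iz l u (axpy x (dir_vec d) 1).

Definition inDc (Iz : pred 'I_n) (l u x s : vec) : Prop :=
  (forall i, i \in Iz -> s i = 0) /\
  (forall i, i \notin Iz -> x i = l i -> 0 <= s i) /\
  (forall i, i \notin Iz -> x i = u i -> s i <= 0).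

(* PCS(at, w, p) returns (alpha, pt) : input/output specification of the loop *)
Definition PCS_spec (l u : vec) (f : vec -> R) (gamma delta : R)
    (at0 : R) (w p : vec) (alpha : R) (pt : vec) : Prop :=
  let acc (q : vec) (a : R) := f (proj l u (axpy w q a)) <= f w - gamma * a ^+ 2 in
  (~ acc p at0 /\ ~ acc (fun i => - p i) at0 /\ alpha = 0 /\ pt = p) \/
  ((acc p at0 /\ pt = p \/ ~ acc p at0 /\ acc (fun i => - p i) at0 /\ pt = (fun i => - p i)) /\
   exists j : nat,
     (forall i : nat, (i <= j)%N -> acc pt (at0 / delta ^+ i)) /\
     ~ acc pt (at0 / delta ^+ j.+1) /\
     alpha = at0 / delta ^+ j).

(* DS(at, w, p, xi) returns alpha : input/output specification of the procedure *)
Definition DS_spec (Iz : pred 'I_n) (l u : vec) (f : vec -> R)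
    (at0 : R) (w : vec) (d : dir) (xi : R) (alpha : R) : Prop :=
  let p := dir_vec d in
  exists abar : R,
    0 <= abar /\ inXZ Iz l u (axpy w p abar) /\
    (forall a, 0 <= a -> inXZ Iz l u (axpy w p a) -> a <= abar) /\
    let a0 := Num.min abar at0 in
    let sa (i : nat) := iter i (fun a => Num.min abar (2 * a)) a0 in
    let acc (a : R) := f (axpy w p a) <= f w - xi in
    ((~ (0 < a0 /\ acc a0)) /\ alpha = 0) \/
    (0 < a0 /\ acc a0 /\
     exists j : nat,
       (forall i : nat, (i < j)%N -> sa i < abar /\ acc (sa i.+1)) /\
       ~ (sa j < abar /\ acc (sa j.+1)) /\
       alpha = sa j).

(* Phase 2.A: L is the sequence of directions chosen (and removed) from D = D_k,
   ta is the tentative step before, ta' after Phase 2.A, yp = y^+. *)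
Definition phase2A_spec (Iz : pred 'I_n) (l u : vec) (f : vec -> R)
    (Dk : seq dir) (ta : dir -> R) (xt : vec) (xi : R)
    (L : seq dir) (yp : vec) (ta' : dir -> R) : Prop :=
  let halve (d : dir) : R := Num.max 1 ((Num.floor (ta d / 2))%:~R) in
  uniq L /\ {subset L <= Dk} /\
  (
    ({subset Dk <= L} /\
     (forall d, d \in L -> DS_spec Iz l u f (ta d) xt d xi 0) /\
     yp = xt /\
     (forall d, ta' d = if d \in L then halve d else ta d))
  \/
    (exists (L' : seq dir) (ds : dir) (alpha : R),
       L = rcons L' ds /\
       (forall d, d \in L' -> DS_spec Iz l u f (ta d) xt d xi 0) /\
       DS_spec Iz l u f (ta ds) xt ds xi alpha /\ alpha <> 0 /\
       yp = axpy xt (dir_vec ds) alpha /\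
       (forall d, ta' d = if d \in L' then halve d
                          else if d == ds then alpha else ta d))).

Definition DFNDFL_step (Iz : pred 'I_n) (l u : vec) (f : vec -> R)
    (gamma delta theta : R) (s : nat -> vec)
    (x xt : nat -> vec) (xi ac : nat -> R) (D : nat -> seq dir)
    (ta : nat -> dir -> R) (k : nat) : Prop :=
  exists (alc : R) (st : vec) (L : seq dir) (yp : vec) (tam : dir -> R),
    PCS_spec l u f gamma delta (ac k) (x k) (s k) alc st /\
    (alc = 0 -> ac k.+1 = theta * ac k /\ xt k = x k) /\
    (alc <> 0 -> ac k.+1 = alc /\ xt k = proj l u (axpy (x k) st alc)) /\
    phase2A_spec Iz l u f (D k) (ta k) (xt k) (xi k) L yp tam /\
    (let cond := yp = xt k /\ (forall d, d \in D k -> ta k d = 1) in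
     (cond ->
        xi k.+1 = theta * xi k /\
        ((forall d, inDz Iz l u (xt k) d -> d \in D k) ->
            D k.+1 =i D k /\ (forall d, ta k.+1 d = tam d)) /\
        (~ (forall d, inDz Iz l u (xt k) d -> d \in D k) ->
            (forall d, d \in D k.+1 -> inDz Iz l u (xt k) d) /\
            {subset D k <= D k.+1} /\ (exists d, d \in D k.+1 /\ d \notin D k) /\
            (forall d, ta k.+1 d = if (d \in D k.+1) && (d \notin D k) then 1 else tam d))) /\
     (~ cond ->
        D k.+1 =i D k /\ xi k.+1 = xi k /\ (forall d, ta k.+1 d = tam d))) /\
    inXZ Iz l u (x k.+1) /\ f (x k.+1) <= f yp.

Definition DFNDFL_run (Iz : pred 'I_n) (l u : vec) (f : vec -> R)
    (gamma delta : R) (x0 : vec) (xi0 theta : R) (s : nat -> vec) (D0 : seq dir)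
    (x xt : nat -> vec) (xi ac : nat -> R) (D : nat -> seq dir)
    (ta : nat -> dir -> R) : Prop :=
  inXZ Iz l u x0 /\ 0 < xi0 /\ 0 < theta < 1 /\
  (forall k, inDc Iz l u x0 (s k) /\ enorm (s k) = 1) /\
  (forall d, d \in D0 -> inDz Iz l u x0 d) /\
  x 0%N = x0 /\ xi 0%N = xi0 /\ ac 0%N = 1 /\ D 0%N = D0 /\
  (forall d, d \in D0 -> ta 0%N d = 1) /\
  (forall k, DFNDFL_step Iz l u f gamma delta theta s x xt xi ac D ta k).

End DFNDFL.

(* Main.v *)
Require Import Defs.
From HB Require Import structures.
From mathcomp Require Import all_boot all_order all_algebra.
From mathcomp Require Import all_classical all_reals all_analysis.
From mathcomp Require Import lra.
Import Order.TTheory GRing.Theory Num.Theory numFieldNormedType.Exports.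
Local Open Scope classical_set_scope.
Local Open Scope ring_scope.
Definition halve {R : realType} (t : R) : R := Num.max 1 ((Num.floor (t / 2))%:~R).

Lemma nonincr (R : realType) (g : nat -> R) K :
  (forall k, (K <= k)%N -> g k.+1 <= g k) ->
  forall a b, (K <= a)%N -> (a <= b)%N -> g b <= g a.
Proof.
move=> h a b Ka /subnK <-; elim: (b - a)%N => // j IH.
rewrite addSn; apply: le_trans (h _ _) IH.
by apply: leq_trans Ka (leq_addl _ _).
Qed.

Arguments nonincr {R g K} _ {a b}.

Lemma halve_ge1 (R : realType) (t : R) : 1 <= halve t.
Proof. by rewrite /halve le_max lexx. Qed.

Lemma halve_le (R : realType) (t a : R) :
  t <= Num.max 1 a -> halve t <= Num.max 1 (a / 2).
Proof.
move=> ht; rewrite /halve ge_max le_max lexx /=.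
have hf := floor_le (t / 2).
rewrite le_max; move: ht; rewrite le_max => /orP[h|h].
  by apply/orP; left; lra.
by apply/orP; right; lra.
Qed.

Lemma two_pow (R : realType) (c : R) : exists m, (0 < m)%N /\ c * (2^-1) ^+ m <= 1.
Proof.
exists (Num.truncn c).+1; split => //.
have h1 := truncnS_gt c.
have h2 : (((Num.truncn c).+1)%:R : R) <= 2 ^+ (Num.truncn c).+1.
  rewrite -natrX ler_nat; apply: ltnW; exact: ltn_expl.
rewrite exprVn ler_pdivrMr ?exprn_gt0 // mul1r.
lra.
Qed.
Arguments two_pow {R}.
Arguments halve_le {R t a}.
Arguments halve_ge1 {R}.

Lemma step_lemma (R : realType) (n : nat) (Iz : pred 'I_n) (l u : vec R n)
    (f : vec R n -> R) (gamma delta theta : R) (s : nat -> vec R n)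
    (x xt : nat -> vec R n) (xi ac : nat -> R) (D : nat -> seq (dir n))
    (ta : nat -> dir n -> R) k :
  0 < gamma -> 0 <= xi k ->
  DFNDFL_step Iz l u f gamma delta theta s x xt xi ac D ta k ->
  xi k.+1 = theta * xi k \/
  (f (x k.+1) <= f (x k) /\ D k.+1 =i D k /\ xi k.+1 = xi k /\
   (f (x k.+1) <= f (x k) - xi k \/
    ((forall d, d \in D k -> ta k.+1 d = halve (ta k d)) /\
     exists d, d \in D k /\ ta k d <> 1))).
Proof.
move=> gp xip [alc [st [L [yp [tam [Hpcs [H0 [Hn0 [H2A [H2B [_ Hf]]]]]]]]]]].
have fxt : f (xt k) <= f (x k).
  case: (eqVneq alc 0) => [a0|an0]; first by rewrite (H0 a0).2.
  have an0' : alc <> 0 by apply/eqP.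
  rewrite (Hn0 an0').2.
  move: Hpcs; rewrite /PCS_spec /=.
  case=> [[_ [_ [a0 _]]]| [_ [j [Hj [_ Ha]]]]]; first by rewrite a0 eqxx in an0.
  have := Hj j (leqnn j); rewrite -Ha => h.
  have : 0 <= gamma * alc ^+ 2 by rewrite mulr_ge0 ?sqr_ge0 // ltW.
  lra.
move: H2B => /= [Hc Hnc].
case: (pselect (yp = xt k /\ (forall d, d \in D k -> ta k d = 1))) => hc.
  by left; exact: (Hc hc).1.
right; have [HD [Hxi Hta]] := Hnc hc.
move: H2A; rewrite /phase2A_spec /=.
move=> [_ [_ [[HDL [Hfail [Hyp Htam]]] | [L' [ds [alpha [HL [Hfail' [Hds [Han0 [Hyp Htam]]]]]]]]]]].
  split; first by move: Hf; rewrite Hyp; lra.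
  do 2 split => //; right; split.
    by move=> d hd; rewrite Hta Htam (HDL _ hd).
  apply: contrapT => hne; apply: hc; split => // d hd.
  by apply: contrapT => h1; apply: hne; exists d.
have fyp : f yp <= f (xt k) - xi k.
  move: Hds; rewrite /DS_spec /=.
  move=> [abar [_ [_ [_ [[_ a0] | [Ha0 [Hacc [j [Hj [_ Ha]]]]]]]]]].
    by rewrite a0 in Han0.
  rewrite Hyp Ha; case: j Hj Ha => [|j] Hj Ha //.
  exact: (Hj j (ltnSn j)).2.
split; first lra.
do 2 split => //; left; lra.
Qed.
Arguments step_lemma {R n Iz l u f gamma delta theta s x xt xi ac D ta k}.

Lemma f_lb (R : realType) (n : nat) (Iz : pred 'I_n) (l u : vec R n)
    (f : vec R n -> R) :
  (forall i, l i < u i) ->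
  (forall i, i \in Iz -> l i \is a Num.int /\ u i \is a Num.int) ->
  lipschitz_cont Iz f ->
  exists B, forall z, inXZ Iz l u z -> - B <= f z.
Proof.
move=> Hlu HI [Lc [Lp HL]].
set N := (\sum_(i < n) Num.truncn (u i - l i))%N.
pose y (p : {ffun 'I_n -> 'I_N.+1}) : vec R n :=
  fun i => if i \in Iz then l i + (p i : nat)%:R else l i.
pose C := Num.sqrt (\sum_(i<n) (u i - l i)^+2).
exists (\sum_(p : {ffun 'I_n -> 'I_N.+1}) `|f (y p)| + Lc * C).
move=> z [zX zZ].
pose p := [ffun i => inord (Num.truncn (z i - l i)) : 'I_N.+1].
have Hy : forall i, i \in Iz -> y p i = z i.
  move=> i iI; have /andP[zl zu] := zX i.
  rewrite /y iI ffunE inordK.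
    have : z i - l i \is a Num.nat.
      by rewrite natrEint rpredB ?zZ ?(HI i iI).1 // subr_ge0.
    by rewrite natrEtruncn => /eqP ->; rewrite addrC subrK.
  rewrite ltnS.
  have h : (Num.truncn (z i - l i) <= Num.truncn (u i - l i))%N.
    by apply: le_truncn; rewrite lerD2r.
  apply: leq_trans h _.
  by rewrite /N (bigD1 i) //= leq_addr.
have key := HL z (y p) (fun i iI => esym (Hy i iI)).
have Hn : enorm (fun i => z i - y p i) <= C.
  rewrite /enorm /C ler_sqrt; last by apply: sumr_ge0 => i _; apply: sqr_ge0.
  apply: ler_sum => i _.
  case: (boolP (i \in Iz)) => iI.
    by rewrite Hy // subrr expr0n /= sqr_ge0.
  rewrite /y (negbTE iI); have /andP[zl zu] := zX i.
  have h1 : 0 <= z i - l i by rewrite subr_ge0.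
  have h2 : z i - l i <= u i - l i by rewrite lerD2r.
  rewrite ler_sqr ?(le_trans h1 h2) // ?nnegrE ?(le_trans h1 h2) //.
have Hfp : `|f (y p)| <= \sum_(p' : {ffun 'I_n -> 'I_N.+1}) `|f (y p')|.
  by rewrite (bigD1 p) //= lerDl sumr_ge0.
have HLC : Lc * enorm (fun i => z i - y p i) <= Lc * C by rewrite ler_wpM2l // ltW.
move: key; rewrite ler_norml => /andP[k1 _].
have := ler_norm (f (y p)); rewrite -normrN => hn.
have := ler_norm (- f (y p)); rewrite normrN.
lra.
Qed.

Arguments f_lb {R n Iz l u f}.

Theorem mainTheorem3 (R : realType) (n : nat) (Iz : pred 'I_n) (l u : vec R n)
    (f : vec R n -> R) (gamma delta : R) (x0 : vec R n) (xi0 theta : R)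
    (s : nat -> vec R n) (D0 : seq (dir n))
    (x xt : nat -> vec R n) (xi ac : nat -> R) (D : nat -> seq (dir n))
    (ta : nat -> dir n -> R) :
  (forall i, l i < u i) ->
  (forall i, i \in Iz -> l i \is a Num.int /\ u i \is a Num.int) ->
  lipschitz_cont Iz f ->
  0 < gamma -> 0 < delta < 1 ->
  DFNDFL_run Iz l u f gamma delta x0 xi0 theta s D0 x xt xi ac D ta ->
  xi n @[n --> \oo] --> (0 : R).
Proof.
move=> Hlu HI Hlip gp _ [x0XZ [xi0p [/andP[th0 th1] [_ [_ [Hx0 [Hxi0 [_ [_ [_ Hstep]]]]]]]]]].
have xipos : forall k, 0 < xi k.
  elim => [|k IH]; first by rewrite Hxi0.
  case: (step_lemma gp (ltW IH) (Hstep k)) => [->|[_ [_ [-> _]]]] //.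
  exact: mulr_gt0.
have xidec : forall k, xi k.+1 <= xi k.
  move=> k; have IH := xipos k.
  case: (step_lemma gp (ltW IH) (Hstep k)) => [->|[_ [_ [-> _]]]] //.
  nra.
have [B HB] := f_lb Hlu HI Hlip.
have fX : forall k, inXZ Iz l u (x k).
  case => [|k]; first by rewrite Hx0.
  by have [? [? [? [? [? [_ [_ [_ [_ [_ [H _]]]]]]]]]]] := Hstep k.
have inf : forall K, exists k, (K <= k)%N /\ xi k.+1 = theta * xi k.
  move=> K0; apply: contrapT => hne.
  have hK : forall k, (K0 <= k)%N -> (f (x k.+1) <= f (x k) /\ D k.+1 =i D k /\ xi k.+1 = xi k /\ (f (x k.+1) <= f (x k) - xi k \/ ((forall d, d \in D k -> ta k.+1 d = halve (ta k d)) /\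
        exists d, d \in D k /\ ta k d <> 1))).
    move=> k Kk; case: (step_lemma gp (ltW (xipos k)) (Hstep k)) => // h.
    by exfalso; apply: hne; exists k.
  have fmono : forall a b, (K0 <= a)%N -> (a <= b)%N -> f (x b) <= f (x a).
    exact: (@nonincr R (fun k => f (x k)) K0 (fun k Kk => (hK k Kk).1)).
  have xiK : forall k, (K0 <= k)%N -> xi k = xi K0.
    move=> k /subnK <-; elim: (k - K0)%N => // j IH.
    by rewrite addSn (hK _ (leq_addl _ _)).2.2.1 IH.
  have [K1 [K01 HK1]] : exists K1, (K0 <= K1)%N /\
      forall k, (K1 <= k)%N -> ~ (f (x k.+1) <= f (x k) - xi k).
    apply: contrapT => hne2.
    have succ : forall K1, (K0 <= K1)%N ->
        exists k, (K1 <= k)%N /\ f (x k.+1) <= f (x k) - xi k.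
      move=> K1 K01; apply: contrapT => h; apply: hne2; exists K1; split => // k K1k hs.
      by apply: h; exists k.
    have dec : forall m : nat, exists k, (K0 <= k)%N /\ f (x k) <= f (x K0) - m%:R * xi K0.
      elim => [|m [k [Kk Hk]]]; first by exists K0; rewrite mul0r subr0.
      have [k' [kk' Hk']] := succ k Kk.
      have K0k' : (K0 <= k')%N := leq_trans Kk kk'.
      exists k'.+1; split; first exact: leq_trans K0k' (leqnSn _).
      have := fmono k k' Kk kk'; rewrite xiK // in Hk'.
      rewrite -natr1 mulrDl mul1r; lra.
    pose m := (Num.truncn ((f (x K0) + B) / xi K0)).+1.
    have [k [Kk Hk]] := dec m.
    have := HB _ (fX k).
    have h1 := truncnS_gt ((f (x K0) + B) / xi K0).
    move: h1; rewrite ltr_pdivrMr ?xipos // => h1.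
    rewrite /m in Hk; lra.
  have hF : forall k, (K1 <= k)%N -> (forall d, d \in D k -> ta k.+1 d = halve (ta k d)) /\
      exists d, d \in D k /\ ta k d <> 1.
    move=> k Kk; have K0k := leq_trans K01 Kk; case: (hK k K0k).2.2.2 => // h.
    by exfalso; exact: HK1 k Kk h.
  have DK : forall j, D (K1 + j)%N =i D K1.
    elim => [|j IH]; first by rewrite addn0.
    move=> d; rewrite addnS ((hK _ _).2.1 d) ?IH //.
    exact: leq_trans K01 (leq_addr _ _).
  pose c := \sum_(d <- D K1) `|ta K1 d|.
  have bnd : forall j d, d \in D K1 -> ta (K1 + j)%N d <= Num.max 1 (c * (2^-1) ^+ j).
    elim => [|j IH] d hd.
      rewrite addn0 expr0 mulr1 le_max; apply/orP; right.
      apply: le_trans (ler_norm _) _; rewrite /c (big_rem d) //= lerDl; apply: sumr_ge0 => *; exact: normr_ge0.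
    rewrite addnS (hF _ (leq_addr _ _)).1; last by rewrite DK.
    rewrite exprSr mulrA; apply: halve_le; exact: IH.
  have [m [m0 hm]] := two_pow c.
  case: m m0 hm => // m _ hm.
  have [_ [d [hd hne1]]] := hF (K1 + m.+1)%N (leq_addr _ _).
  have hd' : d \in D K1 by rewrite -(DK m.+1).
  apply: hne1; apply/le_anti/andP; split.
    have := bnd m.+1 d hd'; by move/le_trans; apply; rewrite ge_max lexx hm.
  rewrite addnS (hF _ (leq_addr _ _)).1 ?halve_ge1 //; by rewrite DK.
have pw : forall m, exists K, xi K <= theta ^+ m * xi0.
  elim => [|m [K HK]]; first by exists 0%N; rewrite expr0 mul1r Hxi0.
  have [k [Kk Hk]] := inf K.
  exists k.+1; rewrite Hk exprS -mulrA ler_pM2l //.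
  exact: le_trans (nonincr (fun k _ => xidec k) (leq0n K) Kk) HK.
apply/cvgrPdist_lt => eps eps0.
have := cvg_expr (_ : `|theta| < 1); rewrite ger0_norm ?ltW // => /(_ th1).
move/cvgrPdist_lt => /(_ (eps / xi0)); rewrite divr_gt0 // => /(_ isT).
case=> M _ /(_ M (leqnn M)) /=; rewrite sub0r normrN ger0_norm ?exprn_ge0 ?ltW //.
move=> hM; have [K HK] := pw M.
exists K => // t /= Kt.
rewrite sub0r normrN gtr0_norm //.
have := nonincr (fun k _ => xidec k) (leq0n K) Kt.
move: hM; rewrite ltr_pdivlMr // => hM.
lra.
Qed.
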